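(* Let $\langle X,\tau\rangle$ be a first-countable Hausdorff space containing $[0,1)$ as a dense and co-dense subset whose subspace topology is the Sorgenfrey topology on $[0,1)$ (generated by $\{[a,b)\cap[0,1)\}$). For $z\in X\setminus[0,1)$ let $\mathsf L(z)$ be the set of $x\in[0,1]$ for which there exists a sequence $p$ in $[0,1)$ converging to $z$ in $\langle X,\tau\rangle$ and converging to $x$ in $[0,1]$ with its usual Euclidean topology. Then for every $z\in X\setminus[0,1)$, $\mathsf L(z)$ is nonempty and is well-ordered by the usual order $<$ of the reals.
   Context: A subset is co-dense if its complement is dense. *)

(* Defs.v *)
From HB Require Import structures.
From mathcomp Require Import all_boot all_order all_algebra.
From mathcomp Require Import all_classical all_reals all_analysis.
Set Implicit Arguments. Unset Strict Implicit. Unset Printing Implicit Defensive.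
Import Order.TTheory GRing.Theory Num.Theory.
Import numFieldTopology.Exports numFieldNormedType.Exports.
Local Open Scope classical_set_scope.
Local Open Scope ring_scope.

(* A space is first countable if every point has a countable (here:
   nat-indexed, which is no loss since neighbourhood filters are nonempty)
   neighbourhood base. *)
Definition first_countable (X : topologicalType) : Prop :=
  forall x : X, exists B : nat -> set X,
    (forall n, nbhs x (B n)) /\ (forall U, nbhs x U -> exists n, B n `<=` U).

Definition I01 (R : realType) : set R := [set x : R | 0 <= x /\ x < 1].
Arguments I01 R : clear implicits.

Definition sorgenfrey_open01 (R : realType) (A : set R) : Prop :=
  A `<=` I01 R /\
  forall x, A x -> exists b, x < b /\ [set y | x <= y /\ y < b] `&` I01 R `<=` A.

Definition embeds_sorgenfrey01 (R : realType) (X : topologicalType) (i : R -> X) : Prop :=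
  {in I01 R &, injective i} /\
  forall A : set R, A `<=` I01 R ->
    (sorgenfrey_open01 A <-> exists U : set X, open U /\ i @^-1` U `&` I01 R = A).

Definition Lset (R : realType) (X : topologicalType) (i : R -> X) (z : X) : set R :=
  [set x : R | 0 <= x /\ x <= 1 /\
    exists p : nat -> R, (forall n, I01 R (p n)) /\
      ((fun n => i (p n)) @ \oo --> z) /\ (p @ \oo --> x)].

Definition well_ordered_by_le (R : realType) (S : set R) : Prop :=
  forall B, B `<=` S -> B !=set0 -> exists2 m, B m & forall y, B y -> m <= y.

(* Main.v *)
Require Import Defs.
From HB Require Import structures.
From mathcomp Require Import all_boot all_order all_algebra.
From mathcomp Require Import all_classical all_reals all_analysis.
From mathcomp Require Import lra.
Import Order.TTheory GRing.Theory Num.Theory.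
Import numFieldTopology.Exports numFieldNormedType.Exports.
Local Open Scope classical_set_scope.
Local Open Scope ring_scope.

Lemma diag (R : realType) (X : topologicalType) (i : R -> X) (z : X)
  (B : nat -> set X) (P : R -> Prop) (x : R) :
  (forall U, nbhs z U -> exists n, B n `<=` U) ->
  (forall k : nat, exists q, P q /\ `|x - q| < k.+1%:R^-1 /\
      forall j, (j <= k)%N -> B j (i q)) ->
  exists p : nat -> R, (forall n, P (p n)) /\
    ((fun n => i (p n)) @ \oo --> z) /\ (p @ \oo --> x).
Proof.
move=> base H; have [p Hp] := choice H.
exists p; split; first by move=> n; case: (Hp n).
split.
  move=> U /base [j BjU].
  apply: filterS (nbhs_infty_ge j) => n jn; apply: BjU.
  by case: (Hp n) => _ [_]; apply.
apply/cvgrPdist_lt => e e0.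
apply: filterS (nbhs_infty_ger e^-1) => n hn.
case: (Hp n) => _ [hd _]; apply: lt_trans hd _.
rewrite -[e]invrK ltf_pV2 ?posrE ?invr_gt0 ?ltr0n //.
by apply: le_lt_trans hn _; rewrite ltr_nat.
Qed.

Theorem mainTheorem13 (R : realType) (X : topologicalType) (i : R -> X) :
  first_countable X -> hausdorff_space X ->
  embeds_sorgenfrey01 i ->
  closure (i @` I01 R) = setT ->
  closure (~` (i @` I01 R)) = setT ->
  forall z : X, ~ (i @` I01 R) z ->
    Lset i z !=set0 /\ well_ordered_by_le (Lset i z).
Proof.
move=> fc hs emb dense _ z nz.
have [B [Bn Bb]] := fc z.
pose C n := [set y | forall j, (j <= n)%N -> B j y].
have Cn : forall n, nbhs z (C n).
  elim=> [|n IH].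
    by apply: filterS (Bn 0%N) => y By j; rewrite leqn0 => /eqP ->.
  apply: filterS (filterI IH (Bn n.+1)) => y [Cy By] j.
  rewrite leq_eqVlt => /orP[/eqP -> //|]; rewrite ltnS; exact: Cy.
split.
  have [p0 Hp0] : {p0 : nat -> R & forall n, I01 R (p0 n) /\ C n (i (p0 n))}.
    suff H : forall n, exists q, I01 R q /\ C n (i q) by exact: choice H.
    move=> n.
    have : closure (i @` I01 R) z by rewrite dense.
    rewrite closureEnbhs => /(_ _ _ (fun x h => h) (Cn n)) [y [[q Iq <-] Cy]].
    by exists q.
  have F01 : (p0 @ \oo) `[0, 1]%classic.
    apply: filterS (nbhs_infty_ge 0) => n _; case: (Hp0 n) => -[h0 h1] _.
    by rewrite /= in_itv /= h0 ltW.
  have [x [x01 clx]] := segment_compact _ F01.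
  move: x01; rewrite /= in_itv /= => /andP[x0 x1].
  have [p [Ip [cz cx]]] : exists p : nat -> R, (forall n, I01 R (p n)) /\
    ((fun n => i (p n)) @ \oo --> z) /\ (p @ \oo --> x).
    apply: (@diag R X i z B (I01 R) x Bb) => k.
    have FA : (p0 @ \oo) (p0 @` [set n | (k <= n)%N]).
      by apply: filterS (nbhs_infty_ge k) => n kn; exists n.
    have [y [[n kn <-] bn]] := clx _ _ FA (@nbhsx_ballx R R (x : R) (k.+1%:R^-1) ltac:(by rewrite invr_gt0 ltr0n)).
    exists (p0 n); split; first by case: (Hp0 n).
    split; first by move: bn; rewrite /ball /=.
    move=> j jk; case: (Hp0 n) => _; apply; exact: leq_trans jk kn.
  by exists x; split => //; split => //; exists p.
move=> S SL [s0 Ss0].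
have lb0 : lbound S 0 by move=> y /SL [].
have hinf : has_inf S by split; [exists s0 | exists 0].
pose m := inf S.
case: (pselect (S m)) => Sm.
  by exists m => // y Sy; apply: ge_inf => //; exists 0.
exfalso.
have mS : forall y, S y -> m < y.
  move=> y Sy; rewrite lt_neqAle; apply/andP; split.
    by apply/negP => /eqP my; apply: Sm; rewrite my.
  by apply: ge_inf => //; exists 0.
have [q [Iq [cz cm]]] : exists p : nat -> R, (forall n, I01 R (p n) /\ m < p n) /\
    ((fun n => i (p n)) @ \oo --> z) /\ (p @ \oo --> m).
  apply: (@diag R X i z B (fun q => I01 R q /\ m < q) m Bb) => k.
  pose e : R := k.+1%:R^-1 / 2.
  have e0 : 0 < e by rewrite divr_gt0 // invr_gt0 ltr0n.
  have [y Sy ylt] := inf_adherent e0 hinf.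
  have my := mS y Sy.
  have [_ [_ [p [Ip [cz cy]]]]] := SL y Sy.
  have : \forall n \near \oo, C k (i (p n)) /\ `|y - p n| < Num.min e (y - m).
    apply: filterI; first exact: cz (Cn k).
    have pos : 0 < Num.min e (y - m) by rewrite lt_min e0 subr_gt0.
    exact: ((cvgrPdist_lt p y).1 cy _ pos).
  move=> /filter_ex [n [Ck dn]].
  move: dn; rewrite lt_min => /andP[d1 d2].
  move: d1 d2; rewrite !ltr_distlC => /andP[a1 a2] /andP[b1 b2].
  exists (p n); split; first by split => //; lra.
  split; last exact: Ck.
  have te : k.+1%:R^-1 = e * 2 by rewrite /e mulfVK // pnatr_eq0.
  rewrite te ltr_distlC; apply/andP; split; lra.
have I0m : I01 R m.
  split; first by apply: lb_le_inf => //; exists s0.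
  by case: (Iq 0%N) => -[_ h1] h2; apply: lt_trans h2 h1.
have czm : (fun n => i (q n)) @ \oo --> i m.
  move=> U hU.
  have [V [oV Vm] VU] : exists2 V, open_nbhs (i m) V & V `<=` U.
    by move: hU; rewrite topology_structure.nbhsE.
  have Asub : i @^-1` V `&` I01 R `<=` I01 R by move=> y [].
  have := (emb.2 _ Asub).2 (ex_intro _ V (conj oV erefl)).
  case=> _ /(_ m (conj Vm I0m)) [b [mb sub]].
  have := (cvgrPdist_lt _ _).1 cm (b - m) (ltac:(by rewrite subr_gt0)).
  move=> H; rewrite nbhs_simpl; apply: (filterS (F := \oo) _ (H _)) => n hn; apply: VU.
  case: (Iq n) => In mq.
  move: hn; rewrite ltr_distlC => /andP[_ h].
  have : ([set y | m <= y /\ y < b] `&` I01 R) (q n).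
    by split => //; split; [exact: ltW | lra].
  by move=> /sub [].
apply: nz; exists m => //.
apply/esym; apply: (@cvg_unique X hs ((fun n => i (q n)) @ \oo) _ z (i m)) => //.
Qed.
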